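(* Let $\mathcal{H}$ be a complex Hilbert space of finite dimension $n\geq 2$ and let $m\geq 2$. There does not exist a density operator $\rho$ on $\mathcal{H}^{\otimes m}$ that is in single $\sigma$-measurement consensus ($\sigma$SMC) for every self-adjoint operator $\sigma$ on $\mathcal{H}$.
   Context: For $X$ an operator on $\mathcal{H}$, write $X^{(i)}=I^{\otimes(i-1)}\otimes X\otimes I^{\otimes(m-i)}$. Given a self-adjoint $\sigma$ on $\mathcal{H}$ with spectral decomposition $\sigma=\sum_j s_j\Pi_j$ (the $s_j$ pairwise distinct, $\Pi_j$ the orthogonal spectral projectors), a density operator $\rho$ on $\mathcal{H}^{\otimes m}$ (positive semidefinite, trace one) is in $\sigma$SMC if $\mathrm{Tr}(\Pi_j^{(k)}\Pi_j^{(\ell)}\rho)=\mathrm{Tr}(\Pi_j^{(\ell)}\rho)$ for all $k,\ell\in\{1,\dots,m\}$ and all $j$. *)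

(* Defs.v *)
From HB Require Import structures.
From mathcomp Require Import all_boot all_order all_algebra.
From mathcomp Require Import reals complex.
Set Implicit Arguments. Unset Strict Implicit. Unset Printing Implicit Defensive.
Import Order.TTheory GRing.Theory Num.Theory.
Local Open Scope ring_scope.

(* Operators on H = C^n are matrices 'M[C]_n (C = R[i]).
   The orthonormal basis of H^{⊗m} is indexed by multi-indices
   x : {ffun 'I_m -> 'I_n}; an operator on H^{⊗m} is given by its matrix
   elements, a function  tidx -> tidx -> C. *)
Definition tidx (n m : nat) := {ffun 'I_m -> 'I_n}.
Definition top (C : Type) (n m : nat) := tidx n m -> tidx n m -> C.

Section Tensor.
Variables (R : realType) (n m : nat).
Local Notation C := R[i].

(* X^{(i)} = I ⊗ ... ⊗ X (i-th factor) ⊗ ... ⊗ I *)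
Definition lift_op (X : 'M[C]_n) (i : 'I_m) : top C n m :=
  fun x y => X (x i) (y i) * (\prod_(k : 'I_m | k != i) ((x k == y k)%:R : C)).

Definition top_mul (A B : top C n m) : top C n m :=
  fun x z => \sum_(y : tidx n m) A x y * B y z.

Definition top_tr (A : top C n m) : C := \sum_(x : tidx n m) A x x.

Definition density (rho : top C n m) : Prop :=
  (forall v : tidx n m -> C,
      0 <= \sum_(x : tidx n m) \sum_(y : tidx n m) Num.conj (v x) * rho x y * v y)
  /\ top_tr rho = 1.

Definition adjmx (A : 'M[C]_n) : 'M[C]_n := (map_mx Num.conj A)^T.

Definition self_adjoint (sigma : 'M[C]_n) : Prop := adjmx sigma = sigma.

(* For s an
   eigenvalue this is the spectral projector Pi_j with s_j = s; otherwise
   P = 0. *)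
Definition spectral_proj (sigma : 'M[C]_n) (s : C) (P : 'M[C]_n) : Prop :=
  [/\ P *m P = P, adjmx P = P &
      forall v : 'cV[C]_n, P *m v = v <-> sigma *m v = s *: v].

Definition sigmaSMC (sigma : 'M[C]_n) (rho : top C n m) : Prop :=
  forall (s : C) (P : 'M[C]_n), spectral_proj sigma s P ->
  forall k l : 'I_m,
    top_tr (top_mul (top_mul (lift_op P k) (lift_op P l)) rho)
    = top_tr (top_mul (lift_op P l) rho).
End Tensor.

(* Main.v *)
Require Import Defs.
From HB Require Import structures.
From mathcomp Require Import all_boot all_order all_algebra.
From mathcomp Require Import reals complex ring.
Import Order.TTheory GRing.Theory Num.Theory.
Local Open Scope ring_scope.
Set Implicit Arguments. Unset Strict Implicit. Unset Printing Implicit Defensive.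

Section Main.
Variables (R : realType) (n' m' : nat).
Local Notation n := n'.+2.
Local Notation m := m'.+2.
Local Notation C := R[i].
Variable rho : top C n m.

Lemma cjM (a b : C) : Num.conj (a * b) = Num.conj a * Num.conj b.
Proof. exact: rmorphM. Qed.
Lemma cjD (a b : C) : Num.conj (a + b) = Num.conj a + Num.conj b.
Proof. exact: rmorphD. Qed.

Lemma cjB (a b : C) : Num.conj (a - b) = Num.conj a - Num.conj b.
Proof. exact: rmorphB. Qed.
Lemma cjn (k : nat) : Num.conj (k%:R : C) = k%:R.
Proof. exact: rmorph_nat. Qed.

Lemma cj1 : Num.conj (1 : C) = 1.
Proof. exact: rmorph1. Qed.
Lemma cjN (a : C) : Num.conj (- a) = - Num.conj a.
Proof. exact: rmorphN. Qed.

Lemma cjI : Num.conj ('i : C) = - 'i.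
Proof. exact: conjCi. Qed.

Lemma qubit_id (V : lmodType C) (F : V -> V -> C) (cj : C -> C) (I : C)
  (FDl : forall A A' B, F (A + A') B = F A B + F A' B)
  (FDr : forall A B B', F A (B + B') = F A B + F A B')
  (FZl : forall c A B, F (c *: A) B = c * F A B)
  (FZr : forall c A B, F A (c *: B) = cj c * F A B)
  (h1 : cj 1 = 1) (h2 : cj (-1) = -1) (h3 : cj I = - I) (h4 : cj (- I) = I)
  (h5 : cj (1 * 1) = 1) (h6 : cj ((-1) * (-1)) = 1) (h7 : cj (I * I) = -1)
  (h8 : cj ((- I) * (- I)) = -1) (hI : I ^+ 2 = -1)
  (a b c d : V) :
  4 * F a a + (4 * F d d + 2 * F (b + c) (b + c) + 6 * F (b + (-1) *: c) (b + (-1) *: c))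
  + ((F (a + 1 *: b + 1 *: c + (1 * 1) *: d) (a + 1 *: b + 1 *: c + (1 * 1) *: d)
      - 2 * (F (a + 1 *: c) (a + 1 *: c) + F (b + 1 *: d) (b + 1 *: d)))
   + (F (a + (-1) *: b + (-1) *: c + ((-1) * (-1)) *: d) (a + (-1) *: b + (-1) *: c + ((-1) * (-1)) *: d)
      - 2 * (F (a + (-1) *: c) (a + (-1) *: c) + F (b + (-1) *: d) (b + (-1) *: d)))
   + (F (a + I *: b + I *: c + (I * I) *: d) (a + I *: b + I *: c + (I * I) *: d)
      - 2 * (F (a + I *: c) (a + I *: c) + F (b + I *: d) (b + I *: d)))
   + (F (a + (- I) *: b + (- I) *: c + ((- I) * (- I)) *: d) (a + (- I) *: b + (- I) *: c + ((- I) * (- I)) *: d)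
      - 2 * (F (a + (- I) *: c) (a + (- I) *: c) + F (b + (- I) *: d) (b + (- I) *: d))))
  = 4 * (F b b + F c c).
Proof.
rewrite !(FDl, FDr, FZl, FZr) h1 h2 h3 h4 h5 h6 h7 h8.
ring: hI.
Qed.

Definition i0 : 'I_m := ord0.
Definition i1 : 'I_m := lift ord0 ord0.
Lemma i01 : i0 != i1. Proof. by []. Qed.
Lemma i10 : i1 != i0. Proof. by []. Qed.

Definition D (x z : tidx n m) : C :=
  \prod_(k | (k != i0) && (k != i1)) ((x k == z k)%:R : C).

Lemma lift_mul (A B : 'M[C]_n) x z :
  top_mul (lift_op A i0) (lift_op B i1) x z =
  A (x i0) (z i0) * B (x i1) (z i1) * D x z.
Proof.
rewrite /top_mul /lift_op.
pose ys : tidx n m := [ffun k => if k == i0 then z k else x k].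
rewrite (bigD1 ys) //= [X in _ + X]big1 ?addr0; last first.
  move=> y Hy.
  have [k hk] : exists k, y k != ys k.
    apply/existsP; move: Hy; apply: contraR => /existsPn H.
    apply/eqP/ffunP => k; apply/eqP; move: (H k); by rewrite negbK.
  case: (eqVneq k i0) => [ek|nk].
    rewrite ek ffunE eqxx in hk.
    rewrite [X in _ * (_ * X)](bigD1 i0) //= (negbTE hk) mul0r; by rewrite !mulr0.
  rewrite ffunE (negbTE nk) eq_sym in hk.
  rewrite [X in (_ * X) * _](bigD1 k) //= (negbTE hk) mul0r; by rewrite !mulr0 mul0r.
rewrite !ffunE eqxx (negbTE i10).
rewrite big1 ?mulr1; last by move=> k hk; rewrite ffunE (negbTE hk) eqxx.
rewrite (bigD1 i0) //= ffunE eqxx eqxx mul1r /D.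
rewrite mulrA; congr (_ * _).
rewrite (eq_bigl (fun k => (k != i0) && (k != i1))); last by move=> k; rewrite andbC.
by apply: eq_bigr => k /andP[hk _]; rewrite ffunE (negbTE hk).
Qed.

Lemma lift1 (B : 'M[C]_n) x z :
  lift_op B i1 x z = (1%:M : 'M[C]_n) (x i0) (z i0) * B (x i1) (z i1) * D x z.
Proof.
rewrite /lift_op (bigD1 i0) //= mxE /D.
rewrite (eq_bigl (fun k => (k != i0) && (k != i1))); last by move=> k; rewrite andbC.
by rewrite mulrA (mulrC (B _ _)).
Qed.

Definition G (A B : 'M[C]_n) : C :=
  \sum_(x : tidx n m) \sum_(z : tidx n m) A (x i0) (z i0) * B (x i1) (z i1) * D x z * rho z x.

Lemma G_tr (A B : 'M[C]_n) : G A B = top_tr (top_mul (top_mul (lift_op A i0) (lift_op B i1)) rho).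
Proof.
rewrite /G /top_tr; apply: eq_bigr => x _.
have -> : forall M, top_mul M rho x x = \sum_(z : tidx n m) M x z * rho z x by [].
apply: eq_bigr => z _.
by rewrite lift_mul.
Qed.

Lemma G1_tr B : G 1%:M B = top_tr (top_mul (lift_op B i1) rho).
Proof.
rewrite /G /top_tr; apply: eq_bigr => x _; rewrite /top_mul; apply: eq_bigr => z _.
by rewrite lift1.
Qed.

Lemma GBl (A A' B : 'M[C]_n) : G (A - A') B = G A B - G A' B.
Proof.
rewrite /G -sumrB; apply: eq_bigr => x _; rewrite -sumrB; apply: eq_bigr => z _.
rewrite !mxE. ring.
Qed.

Lemma GBr (A B B' : 'M[C]_n) : G A (B - B') = G A B - G A B'.
Proof.
rewrite /G -sumrB; apply: eq_bigr => x _; rewrite -sumrB; apply: eq_bigr => z _.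
rewrite !mxE /=; ring.
Qed.

Definition Bf (A B : 'M[C]_n) : C :=
  \sum_(x : tidx n m) \sum_(z : tidx n m) A (x i0) (x i1) * Num.conj (B (z i0) (z i1)) * D x z * rho z x.
Definition Om (A : 'M[C]_n) := Bf A A.

Lemma BfDl (A A' B : 'M[C]_n) : Bf (A + A') B = Bf A B + Bf A' B.
Proof.
rewrite /Bf -big_split; apply: eq_bigr => x _; rewrite -big_split; apply: eq_bigr => z _.
rewrite !mxE /=; ring.
Qed.
Lemma BfDr (A B B' : 'M[C]_n) : Bf A (B + B') = Bf A B + Bf A B'.
Proof.
rewrite /Bf -big_split; apply: eq_bigr => x _; rewrite -big_split; apply: eq_bigr => z _.
rewrite !mxE rmorphD /=; ring.
Qed.
Lemma BfZl (c : C) (A B : 'M[C]_n) : Bf (c *: A) B = c * Bf A B.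
Proof.
rewrite /Bf mulr_sumr; apply: eq_bigr => x _; rewrite mulr_sumr; apply: eq_bigr => z _.
rewrite !mxE /=; ring.
Qed.
Lemma BfZr (c : C) (A B : 'M[C]_n) : Bf A (c *: B) = Num.conj c * Bf A B.
Proof.
rewrite /Bf mulr_sumr; apply: eq_bigr => x _; rewrite mulr_sumr; apply: eq_bigr => z _.
rewrite !mxE rmorphM; ring.
Qed.


Lemma conjD x z : Num.conj (D x z) = D x z.
Proof. by rewrite /D rmorph_prod; apply: eq_bigr => k _; rewrite rmorph_nat. Qed.

Lemma D_rep x z : D x z =
  \sum_(w : tidx n m | (w i0 == ord0) && (w i1 == ord0)) D x w * D z w.
Proof.
pose ws : tidx n m := [ffun k => if (k == i0) || (k == i1) then ord0 else x k].
have hws : (ws i0 == ord0) && (ws i1 == ord0) by rewrite !ffunE !eqxx ?orbT /= ?eqxx.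
rewrite (bigD1 ws) //= [X in _ + X]big1 ?addr0; last first.
  move=> w /andP[/andP[w0 w1] Hw].
  have [k hk] : exists k, w k != ws k.
    apply/existsP; move: Hw; apply: contraR => /existsPn H.
    apply/eqP/ffunP => k; apply/eqP; move: (H k); by rewrite negbK.
  move: hk; rewrite ffunE.
  case: (eqVneq k i0) => [->|nk0]; first by rewrite (eqP w0) !eqxx /= ?eqxx.
  case: (eqVneq k i1) => [->|nk1]; first by rewrite (eqP w1) !eqxx ?orbT /= ?eqxx.
  move=> /= hk; rewrite /D (bigD1 k) /=; last by rewrite nk0 nk1.
  by rewrite eq_sym (negbTE hk) !mul0r.
rewrite [D x ws]/D big1 ?mul1r; last first.
  by move=> k /andP[a b]; rewrite ffunE (negbTE a) (negbTE b) eqxx.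
rewrite /D; apply: eq_bigr => k /andP[a b].
by rewrite ffunE (negbTE a) (negbTE b) eq_sym.
Qed.

Lemma prod_eq (x z : tidx n m) : \prod_k ((x k == z k)%:R : C) = (x == z)%:R.
Proof.
case: (eqVneq x z) => [->|ne].
  by rewrite big1 // => k _; rewrite eqxx.
have [k hk] : exists k, x k != z k.
  apply/existsP; move: ne; apply: contraR => /existsPn H.
  apply/eqP/ffunP => k; apply/eqP; move: (H k); by rewrite negbK.
by rewrite (bigD1 k) //= (negbTE hk) mul0r.
Qed.

Lemma Dfull (x z : tidx n m) : (x i0 == z i0)%:R * (x i1 == z i1)%:R * D x z = ((x == z)%:R : C).
Proof.
by rewrite -prod_eq (bigD1 i0) //= (bigD1 i1) //= mulrA.
Qed.

Hypothesis hpos : forall v : tidx n m -> C,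
  0 <= \sum_(x : tidx n m) \sum_(y : tidx n m) Num.conj (v x) * rho x y * v y.

Lemma Om_ge0 (A : 'M[C]_n) : 0 <= Om A.
Proof.
rewrite /Om /Bf.
under eq_bigr => x _ do under eq_bigr => z _ do rewrite D_rep mulr_sumr mulr_suml.
under eq_bigr => x _ do rewrite exchange_big /=.
rewrite exchange_big /=.
apply: sumr_ge0 => w _.
rewrite exchange_big /=.
apply: le_trans (hpos (fun x => A (x i0) (x i1) * D x w)) _.
rewrite le_eqVlt; apply/orP; left; apply/eqP.
apply: eq_bigr => z _; apply: eq_bigr => x _.
rewrite /= cjM conjD; ring.
Qed.


Hypothesis hsmc : forall sigma : 'M[C]_n, self_adjoint sigma -> sigmaSMC sigma rho.

Lemma G_proj (Q : 'M[C]_n) : Q *m Q = Q -> adjmx Q = Q -> G Q Q = G 1%:M Q.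
Proof.
move=> h1 h2; rewrite G_tr G1_tr.
have sp : spectral_proj Q 1 Q by split => // v; rewrite scale1r.
exact: (hsmc h2 sp i0 i1).
Qed.

Lemma compl_proj (P : 'M[C]_n) : P *m P = P -> adjmx P = P ->
  (1%:M - P) *m (1%:M - P) = 1%:M - P /\ adjmx (1%:M - P) = 1%:M - P.
Proof.
move=> h1 h2; split.
  by rewrite mulmxBl !mulmxBr !mul1mx ?mulmx1 h1 subrr subr0.
apply/matrixP => a c; move/matrixP: h2 => /(_ a c); rewrite !mxE => h.
by rewrite cjB cjn eq_sym h.
Qed.

Lemma G_zero (P : 'M[C]_n) : P *m P = P -> adjmx P = P -> G P 1%:M = G P P.
Proof.
move=> h1 h2; have [h1' h2'] := compl_proj h1 h2.
have := G_proj h1' h2'; rewrite GBl => H.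
have H0 : G P (1%:M - P) = 0.
  have -> : G P (1%:M - P) = G 1%:M (1%:M - P) - (G 1%:M (1%:M - P) - G P (1%:M - P)).
    by rewrite opprB addrCA subrr addr0.
  by rewrite H subrr.
by move: H0; rewrite GBr => /eqP; rewrite subr_eq0 => /eqP.
Qed.

Definition Pm (s : C) (u : 'I_n -> C) : 'M[C]_n :=
  \matrix_(a, c) (s * (u a * Num.conj (u c))).
Definition tens (u w : 'I_n -> C) : 'M[C]_n := \matrix_(p, q) (u p * w q).
Definition ev (b : 'I_n) : 'I_n -> C := fun q => (q == b)%:R.

Lemma Pm_proj s u : s * (\sum_b Num.conj (u b) * u b) = 1 -> Num.conj s = s ->
  Pm s u *m Pm s u = Pm s u /\ adjmx (Pm s u) = Pm s u.
Proof.
move=> hs hr; split.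
  apply/matrixP => a c; rewrite !mxE.
  transitivity (s * (u a * Num.conj (u c)) * (s * \sum_b Num.conj (u b) * u b));
    last by rewrite hs mulr1.
  rewrite !mulr_sumr; apply: eq_bigr => b _; rewrite !mxE; ring.
apply/matrixP => a c; rewrite !mxE !cjM hr conjCK; ring.
Qed.

Lemma sum_ev p q : \sum_b ev b p * Num.conj (ev b q) = (p == q)%:R.
Proof.
rewrite (bigD1 p) //= big1 ?addr0; last first.
  by move=> b hb; rewrite /ev eq_sym (negbTE hb) mul0r.
by rewrite /ev eqxx /= mulr1n mul1r cjn eq_sym.
Qed.

Lemma G_Pm1 s u : G (Pm s u) 1%:M = s * \sum_b Om (tens u (ev b)).
Proof.
rewrite /Om /Bf exchange_big /=.
under [in RHS]eq_bigr => x _ do rewrite exchange_big /=.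
rewrite /G mulr_sumr; apply: eq_bigr => x _; rewrite mulr_sumr; apply: eq_bigr => z _.
under eq_bigr => b _ do rewrite !mxE.
rewrite (eq_bigr (fun b => (u (x i0) * Num.conj (u (z i0)) * D x z * rho z x) *
   (ev b (x i1) * Num.conj (ev b (z i1))))); last by move=> b _; rewrite cjM; ring.
rewrite -mulr_sumr sum_ev !mxE.
generalize ((x i1 == z i1)%:R : C) => t; ring.
Qed.

Lemma G_PmPm s u : Num.conj s = s -> G (Pm s u) (Pm s u) = s * s * Om (tens u u).
Proof.
move=> hr; rewrite /G /Om /Bf mulr_sumr; apply: eq_bigr => x _.
rewrite mulr_sumr; apply: eq_bigr => z _; rewrite !mxE !cjM; ring.
Qed.

Lemma rank1 s u : s * (\sum_b Num.conj (u b) * u b) = 1 -> Num.conj s = s ->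
  s * \sum_b Om (tens u (ev b)) = s * s * Om (tens u u).
Proof.
move=> hs hr; have [h1 h2] := Pm_proj hs hr.
by rewrite -G_Pm1 -G_PmPm // G_zero.
Qed.

Lemma trace_sum : \sum_a \sum_b Om (tens (ev a) (ev b)) = top_tr rho.
Proof.
rewrite /Om /Bf /top_tr.
under eq_bigr => a _ do rewrite exchange_big /=.
rewrite exchange_big /=; apply: eq_bigr => x _.
under eq_bigr => a _ do rewrite exchange_big /=.
rewrite exchange_big /=.
transitivity (\sum_z (((x == z)%:R : C) * rho z x)); last first.
  rewrite (bigD1 x) //= big1 ?addr0 ?eqxx ?mul1r //.
  by move=> z hz; rewrite eq_sym (negbTE hz) mul0r.
apply: eq_bigr => z _; rewrite -Dfull.
transitivity (\sum_a \sum_b (D x z * rho z x) *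
   ((ev a (x i0) * Num.conj (ev a (z i0))) * (ev b (x i1) * Num.conj (ev b (z i1))))).
  apply: eq_bigr => a _; apply: eq_bigr => b _; rewrite !mxE !cjM; ring.
rewrite -(sum_ev (x i0)) -(sum_ev (x i1)).
set K := D x z * rho z x.
rewrite -mulrA -/K [RHS]mulrC mulr_suml [RHS]mulr_sumr; apply: eq_bigr => a _.
rewrite [X in _ = K * X]mulr_sumr [RHS]mulr_sumr; apply: eq_bigr => b _; ring.
Qed.

Lemma split2 (f : 'I_n -> C) j k : j != k ->
  \sum_b f b = f j + f k + \sum_(b | (b != j) && (b != k)) f b.
Proof.
move=> hjk; rewrite (bigD1 j) //= (bigD1 k) /=; last by rewrite eq_sym.
by rewrite addrA.
Qed.

Lemma tens_u j k c b : tens (fun p => ev j p + c * ev k p) (ev b) =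
  tens (ev j) (ev b) + c *: tens (ev k) (ev b).
Proof. by apply/matrixP => p q; rewrite !mxE; ring. Qed.

Lemma tens_uu j k c : tens (fun p => ev j p + c * ev k p) (fun p => ev j p + c * ev k p) =
  tens (ev j) (ev j) + c *: tens (ev j) (ev k) + c *: tens (ev k) (ev j)
  + (c * c) *: tens (ev k) (ev k).
Proof. by apply/matrixP => p q; rewrite !mxE; ring. Qed.

Lemma cjV2 : Num.conj (2^-1 : C) = 2^-1.
Proof. by rewrite fmorphV /=; congr (_^-1); exact: (cjn 2). Qed.

Lemma Kc j k c : j != k -> Num.conj c * c = 1 ->
  2 * (Om (tens (ev j) (ev j) + c *: tens (ev k) (ev j))
       + Om (tens (ev j) (ev k) + c *: tens (ev k) (ev k))
       + \sum_(b | (b != j) && (b != k)) Om (tens (fun p => ev j p + c * ev k p) (ev b)))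
  = Om (tens (ev j) (ev j) + c *: tens (ev j) (ev k) + c *: tens (ev k) (ev j)
        + (c * c) *: tens (ev k) (ev k)).
Proof.
move=> hjk hc.
have hkj : k != j by rewrite eq_sym.
have hn : \sum_b Num.conj (ev j b + c * ev k b) * (ev j b + c * ev k b) = 2.
  rewrite (split2 _ hjk) big1 ?addr0; last first.
    by move=> b /andP[a1 a2]; rewrite /ev (negbTE a1) (negbTE a2) /= !mulr0n mulr0 addr0 mulr0.
  rewrite /ev !eqxx (negbTE hjk) (negbTE hkj) /= !mulr1n !mulr0n !mulr0 mulr1 !addr0 add0r.
  rewrite cj1 hc; ring.
have h2 : (2 : C) != 0 by rewrite pnatr_eq0.
have hh : (2^-1 : C) * 2 = 1 by rewrite mulVf.
have := rank1 (s := 2^-1) (u := fun p => ev j p + c * ev k p).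
rewrite hn => /(_ hh cjV2).
rewrite (split2 _ hjk) !tens_u tens_uu => H.
set a := (X in 2^-1 * X = _) in H; set b := Om _ in H.
have -> : 2 * a = 2 * 2 * (2^-1 * a).
  have -> : 2 * 2 * (2^-1 * a) = 2 * ((2^-1 * 2) * a) by ring.
  by rewrite hh mul1r.
rewrite H.
have -> : 2 * 2 * (2^-1 * 2^-1 * b) = (2^-1 * 2) * ((2^-1 * 2) * b) by ring.
by rewrite hh !mul1r.
Qed.

Lemma diagsum j : \sum_b Om (tens (ev j) (ev b)) = Om (tens (ev j) (ev j)).
Proof.
have hn : (1 : C) * \sum_b Num.conj (ev j b) * ev j b = 1.
  rewrite mul1r (bigD1 j) //= big1 ?addr0; last first.
    by move=> b hb; rewrite /ev (negbTE hb) /= mulr0n mulr0.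
  by rewrite /ev eqxx /= mulr1n cj1 mulr1.
have := rank1 hn cj1; by rewrite !mul1r.
Qed.

Lemma offdiag j k : j != k -> Om (tens (ev j) (ev k)) = 0.
Proof.
move=> hjk; have := diagsum j; rewrite (bigD1 j) //= => /eqP.
rewrite addrC -subr_eq0 addrK => /eqP H.
apply: (psumr_eq0P _ H); last by rewrite eq_sym.
by move=> b _; apply: Om_ge0.
Qed.

Definition Qc j k (c : C) :=
  Om (tens (ev j) (ev j) + c *: tens (ev j) (ev k) + c *: tens (ev k) (ev j)
        + (c * c) *: tens (ev k) (ev k))
  - 2 * (Om (tens (ev j) (ev j) + c *: tens (ev k) (ev j))
       + Om (tens (ev j) (ev k) + c *: tens (ev k) (ev k))).

Lemma Kc2 j k c : j != k -> Num.conj c * c = 1 ->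
  2 * \sum_(b | (b != j) && (b != k)) Om (tens (fun p => ev j p + c * ev k p) (ev b))
  = Qc j k c.
Proof.
move=> hjk hc.
have alg (a b r u : C) : 2 * (a + b + r) = u -> 2 * r = u - 2 * (a + b) by move<-; ring.
exact: (alg _ _ _ _ (Kc hjk hc)).
Qed.

Lemma diag0 j k : j != k -> Om (tens (ev j) (ev j)) = 0.
Proof.
move=> hjk.
have hkj : k != j by rewrite eq_sym.
have c1 : Num.conj (1 : C) * 1 = 1 by rewrite cj1 mulr1.
have c2 : Num.conj (-1 : C) * (-1) = 1 by rewrite cjN cj1 mulrNN mulr1.
have c3 : Num.conj ('i : C) * 'i = 1 by rewrite cjI mulNr -expr2 sqrCi opprK.
have c4 : Num.conj (- 'i : C) * (- 'i) = 1.
  by rewrite cjN cjI opprK mulrN -expr2 sqrCi opprK.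
have K1 := Kc2 hjk c1.
have K2 := Kc2 hjk c2.
have K3 := Kc2 hjk c3.
have K4 := Kc2 hjk c4.
have E : 4 * Om (tens (ev j) (ev j)) + (4 * Om (tens (ev k) (ev k))
     + 2 * Om (tens (ev j) (ev k) + tens (ev k) (ev j))
     + 6 * Om (tens (ev j) (ev k) + (-1) *: tens (ev k) (ev j)))
     + (Qc j k 1 + Qc j k (-1) + Qc j k 'i + Qc j k (- 'i))
     = 4 * (Om (tens (ev j) (ev k)) + Om (tens (ev k) (ev j))).
  have h5 : Num.conj ((1 : C) * 1) = 1 by rewrite mulr1 cj1.
  have h6 : Num.conj ((-1 : C) * (-1)) = 1 by rewrite mulrNN mulr1 cj1.
  have h7 : Num.conj (('i : C) * 'i) = -1 by rewrite -expr2 sqrCi cjN cj1.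
  have h8 : Num.conj ((- 'i : C) * (- 'i)) = -1 by rewrite mulrNN -expr2 sqrCi cjN cj1.
  have h4 : Num.conj (- 'i : C) = 'i by rewrite cjN cjI opprK.
  have h2 : Num.conj (-1 : C) = -1 by rewrite cjN cj1.
  have := (qubit_id (V := 'M[C]_n) (F := Bf) (@BfDl) (@BfDr) (@BfZl) (@BfZr) cj1 h2 cjI h4 h5 h6 h7 h8 (sqrCi _)
     (tens (ev j) (ev j)) (tens (ev j) (ev k)) (tens (ev k) (ev j)) (tens (ev k) (ev k))).
  by rewrite /Qc /Om.
move: E; rewrite -K1 -K2 -K3 -K4 (offdiag hjk) (offdiag hkj) addr0 mulr0 => /eqP E.
have p4 : forall A, 0 <= 4 * Om A by move=> A; rewrite mulr_ge0 ?Om_ge0 ?ler0n.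
have ps : forall c : C, 0 <= 2 * \sum_(b | (b != j) && (b != k))
    Om (tens (fun p => ev j p + c * ev k p) (ev b)).
  by move=> c; rewrite mulr_ge0 ?ler0n // sumr_ge0 // => b _; apply: Om_ge0.
have pY : 0 <= 4 * Om (tens (ev k) (ev k))
     + 2 * Om (tens (ev j) (ev k) + tens (ev k) (ev j))
     + 6 * Om (tens (ev j) (ev k) + (-1) *: tens (ev k) (ev j)).
  by rewrite !addr_ge0 // mulr_ge0 ?ler0n ?Om_ge0.
have pT := addr_ge0 (addr_ge0 (addr_ge0 (ps 1) (ps (-1))) (ps 'i)) (ps (- 'i)).
move: E; rewrite paddr_eq0 ?(addr_ge0 (p4 _) pY) // => /andP[].
rewrite paddr_eq0 // => /andP[E _] _.
by move: E; rewrite mulf_eq0 pnatr_eq0 /= => /eqP.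
Qed.

End Main.

Unset Implicit Arguments.
Set Strict Implicit.

Theorem proposition1 (R : realType) (n m : nat) :
  (2 <= n)%N -> (2 <= m)%N ->
  ~ exists rho : top R[i] n m,
      density rho /\
      forall sigma : 'M[R[i]]_n, self_adjoint sigma -> sigmaSMC sigma rho.
Proof.
case: n => [|[|n']] // _; case: m => [|[|m']] // _.
case=> rho [[hpos htr] hsmc].
have Z : forall a : 'I_n'.+2, \sum_b Om rho (tens (ev R a) (ev R b)) = 0.
  move=> a; rewrite (diagsum hsmc).
  have hak : a != (if a == ord0 then lift ord0 ord0 else ord0).
    by case: (eqVneq a ord0) => [->|h] //.
  exact: (diag0 hpos hsmc hak).
move: htr; rewrite -trace_sum big1 // => /eqP.
by rewrite eq_sym oner_eq0.
Qed.
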